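(* Let $X$ be a Polish space and $n\in\mathbb{N}$. The map $\tau\mapsto\tau^*$ from $\mathcal{M}(X^{(n)})$ to $\mathcal{M}(X)$ is continuous.
   Context: $X^{(n)}$ is the quotient of $X^n$ by permutations of coordinates with the quotient topology, identified with the set of multisets $m:X\to\mathbb{N}$ of cardinality $n$. $\mathcal{M}(Z)$ denotes the finite Borel measures on $Z$ with the weak topology (generated by $\tau\mapsto\int f\,d\tau$ for bounded continuous $f$). For $\tau\in\mathcal{M}(X^{(n)})$, $\tau^*$ is the Borel measure on $X$ defined by $\tau^*(E)=\sum_{i=1}^n\tau\big(s^{-1}(\pi_i^{-1}(E))\big)$, where $s:X^{(n)}\to X^n$ is a universally measurable map with $q\circ s=\mathrm{id}$ ($q$ the quotient map) and $\pi_i:X^n\to X$ the $i$-th projection; equivalently $\tau^*(E)=\int\sum_{x\in E}m(x)\,d\tau(m)$. *)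

(* Defs.v *)
From HB Require Import structures.
From mathcomp Require Import all_boot all_order all_algebra all_fingroup.
From mathcomp Require Import generic_quotient.
Local Open Scope quotient_scope.
From mathcomp Require Import all_classical all_reals all_analysis.

Set Implicit Arguments.
Unset Strict Implicit.
Unset Printing Implicit Defensive.
Import Order.TTheory GRing.Theory Num.Theory numFieldNormedType.Exports.
Local Open Scope classical_set_scope.
Local Open Scope ring_scope.

Definition polish (R : realType) (X : topologicalType) : Prop :=
  (exists D : set X, countable D /\ closure D = setT) /\
  exists d : X -> X -> R,
    [/\
        [/\ (forall x y, 0 <= d x y),
            (forall x y, d x y = 0 <-> x = y),
            (forall x y, d x y = d y x) &
            (forall x y z, d x z <= d x y + d y z)],
        (forall A : set X, open A <->
            (forall x, A x -> exists2 e : R, 0 < e & [set y | d x y < e] `<=` A)) &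
        (forall u : nat -> X,
            (forall e : R, 0 < e -> exists N : nat, forall p q : nat,
                 (N <= p)%N -> (N <= q)%N -> d (u p) (u q) < e) ->
            exists l : X, (fun k => d (u k) l) @ \oo --> (0 : R^o))].

(** ** Symmetric power X^(n) = X^n / S_n with the quotient topology.
    X^n is 'rV[X]_n with its product topology. *)
Section SymPow.
Variables (X : ptopologicalType) (n : nat).

Definition entries (v : 'rV[X]_n) : seq X := [seq v ord0 i | i <- enum 'I_n].

(* two points of X^n are identified iff they differ by a permutation of
   coordinates, i.e. iff their coordinate lists are permutations of each other *)
Definition perm_rel : rel 'rV[X]_n := fun v w => perm_eq (entries v) (entries w).

Lemma perm_rel_refl : reflexive perm_rel.
Proof. by move=> v; exact: perm_refl. Qed.

Lemma perm_rel_sym : symmetric perm_rel.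
Proof. by move=> v w; exact: perm_sym. Qed.

Lemma perm_rel_trans : transitive perm_rel.
Proof. by move=> v u w; exact: perm_trans. Qed.

Canonical perm_equiv := EquivRel perm_rel perm_rel_refl perm_rel_sym perm_rel_trans.

Definition sympow_quot := {eq_quot perm_equiv}.

Definition sympow : ptopologicalType := quotient_topology sympow_quot.

(** multiset view: for q in X^(n) and E, the number sum_{x in E} q(x) *)
Definition mult_in (E : set X) (q : sympow) : nat :=
  count (fun x => `[< E x >]) (entries (repr q)).

End SymPow.

Definition borel (T : ptopologicalType) := g_sigma_algebraType (@open T).

Definition fmeasure (R : realType) (T : ptopologicalType) :=
  {finite_measure set (borel T) -> \bar R}.
HB.instance Definition _ R T := gen_eqMixin (fmeasure R T).
HB.instance Definition _ R T := gen_choiceMixin (fmeasure R T).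

Definition bcfun (R : realType) (T : ptopologicalType) :=
  {f : T -> R | continuous f /\ exists M : R, forall x, `|f x| <= M}.

Definition meas_eval (R : realType) (T : ptopologicalType) (mu : fmeasure R T) :
  {ptws bcfun R T -> R} :=
  fun f => fine (\int[mu]_x ((proj1_sig f : borel T -> R) x)%:E).

(** M(T): finite Borel measures with the weak topology, i.e. the initial
    topology of the maps mu |-> \int f dmu, f bounded continuous *)
Definition Meas (R : realType) (T : ptopologicalType) :=
  initial_topology (@meas_eval R T).

(* Main.v *)
Require Import Defs.
From HB Require Import structures.
From mathcomp Require Import all_boot all_order all_algebra all_fingroup.
From mathcomp Require Import generic_quotient zify.
From mathcomp Require Import all_classical all_reals all_analysis.
From mathcomp Require Import measurable_realfun.
Import Order.TTheory GRing.Theory Num.Theory numFieldNormedType.Exports.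
Local Open Scope classical_set_scope.
Local Open Scope ring_scope.
Local Open Scope quotient_scope.

Lemma sum_lt_minn (m k : nat) : (\sum_(i < k) (i < m : nat))%N = minn m k.
Proof.
elim: k => [|k IH]; first by rewrite big_ord0 minn0.
rewrite big_ord_recr /= IH; lia.
Qed.

Lemma borel_open (T : ptopologicalType) (A : set T) : open A -> measurable (A : set (borel T)).
Proof. by move=> oA; apply: sub_gen_smallest. Qed.

Section S.
Variables (R : realType) (X : ptopologicalType) (n : nat).
Local Notation S := (sympow X n).
Local Notation BX := (borel X).
Local Notation BS := (borel S).
Definition ent (q : S) : seq X := entries (repr q).

Lemma mx_coord_continuous (i : 'I_1) (j : 'I_n) :
  continuous (fun v : 'rV[X]_n => v i j).
Proof.
move=> v A /= nA.
exists (fun i' j' => if (i' == i) && (j' == j) then A else setT).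
  by move=> i' j'; case: ifP => [/andP[/eqP-> /eqP->]//|_]; exact: filterT.
by move=> w /(_ i j); rewrite !eqxx.
Qed.

Lemma ent_pi (v : 'rV[X]_n) : perm_eq (ent (\pi_S v)) (entries v).
Proof.
have : \pi_(sympow_quot X n) (repr (\pi_S v)) = \pi_(sympow_quot X n) v.
  by rewrite reprK.
by move/eqmodP.
Qed.

Lemma size_ent q : size (ent q) = n.
Proof. by rewrite /ent /entries size_map size_enum_ord. Qed.

Lemma open_count (E : set X) (k : nat) : open E ->
  open [set v : 'rV[X]_n | (k <= count (fun x => `[< E x >]) (entries v))%N].
Proof.
move=> oE; rewrite openE => v /= hv.
exists (fun i j => if `[< E (v i j) >] then E else setT).
  move=> i j; case: ifP => [/asboolP Ev|_]; last exact: filterT.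
  by apply: open_nbhs_nbhs; split.
move=> w hw /=; apply: (leq_trans hv).
rewrite /entries !count_map; apply: sub_count => j /=.
have := hw ord0 j; case: asboolP => //= Ev Ew _; exact/asboolP.
Qed.

Lemma open_mult (E : set X) (k : nat) : open E ->
  open [set q : S | (k <= mult_in E q)%N].
Proof.
move=> oE; have := open_count E k oE.
congr open; apply/seteqP; split => v /=; rewrite /mult_in -/(ent _) ((seq.permP (ent_pi v)) _) //.
Qed.

Lemma mult_le_n (E : set X) (q : S) : (mult_in E q <= n)%N.
Proof. by rewrite /mult_in -/(ent q) -(size_ent q) count_size. Qed.

Lemma measurable_mult_open (E : set X) : open E ->
  measurable_fun setT (fun q : BS => ((mult_in E q)%:R : R)).
Proof.
move=> oE.
have -> : (fun q : BS => ((mult_in E q)%:R : R)) =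
   (fun q : BS => \sum_(k < n) (\1_([set q : S | (k.+1 <= mult_in E q)%N]) q : R)).
  apply/funext => q.
  under eq_bigr do rewrite indicE.
  rewrite -natr_sum (eq_bigr (fun k : 'I_n => (k < mult_in E q : nat))); last first.
      by move=> k _ /=; congr nat_of_bool; apply/idP/idP => [/set_mem|/mem_set].
  by rewrite -{1}(minn_idPl (mult_le_n E q)) -sum_lt_minn natr_sum.
apply: measurable_sum => k; apply: measurable_realfun.measurable_indic.
exact: borel_open (open_mult _ _ oE).
Qed.

Definition kappa (q : BS) : {measure set BX -> \bar R} :=
  msum (fun i => \d_(nth (point : BX) (ent q) i)) (size (ent q)).

Lemma kappaE q (E : set BX) : kappa q E = ((mult_in E q)%:R)%:E.
Proof.
rewrite /kappa /msum /mult_in -/(ent q).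
transitivity (\sum_(x <- ent q) (\d_(x : BX) E : \bar R))%E.
  by rewrite (big_nth (point : BX)) big_mkord.
elim: (ent q) => [|x s IH]; first by rewrite big_nil.
by rewrite big_cons IH diracE /= natrD EFinD; congr (_ + _)%E.
Qed.

Definition multE (E : set X) (q : S) : \bar R := (((mult_in E q)%:R : R)%:E).

Lemma measurable_multE (E : set BX) : measurable E ->
  measurable_fun setT (fun q : BS => multE E q).
Proof.
move=> mE.
apply: (@dynkin_induction _ BX open (fun E => measurable_fun setT (fun q : BS => multE E q))) => //.
- by move=> A B oA oB; exact: openI.
- have -> : (fun q : BS => multE setT q) = cst (n%:R%:E).
    apply/funext => q; rewrite /multE /mult_in -/(ent q).
    by rewrite (eq_count (a2 := predT)) ?count_predT ?size_ent // => x; apply/asboolP.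
  exact: measurable_cst.
- move=> A oA.
  by apply/measurable_realfun.measurable_EFinP; exact: measurable_mult_open.
- move=> A mA mfA.
  have -> : (fun q : BS => multE (~` A) q) = (fun q => n%:R%:E - multE A q)%E.
    apply/funext => q; rewrite /multE -EFinB -natrB ?mult_le_n //.
    congr ((_ %:R)%:E); rewrite /mult_in -/(ent q) -(size_ent q) -(count_predC (fun x => `[< A x >])).
    rewrite addKn; apply: eq_count => x /=; exact: asbool_neg.
  by apply: emeasurable_funB => //; exact: measurable_cst.
- move=> F mF tF mfF.
  have -> : (fun q : BS => multE (\bigcup_k F k) q) =
            (fun q => \sum_(k <oo | k \in [set: nat]) multE (F k) q)%E.
    apply/funext => q; rewrite /multE -kappaE (measure_bigcup (kappa q) [set: nat] F) //=.
    by apply: congr_lim; apply/funext => m; apply: eq_bigr => k _; rewrite kappaE.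
  apply: ge0_emeasurable_sum.
    by move=> k x _ _; rewrite /multE lee_fin ler0n.
  by move=> k _; exact: mfF.
Qed.

Lemma kappa_multE (E : set BX) : (fun q : BS => kappa q E) = multE E.
Proof. by apply/funext => q; rewrite kappaE. Qed.

Lemma measurable_kappa (E : set BX) : measurable E ->
  measurable_fun setT (fun q : BS => kappa q E).
Proof. by move=> mE; rewrite kappa_multE; exact: measurable_multE. Qed.

Section tstar.
Variable tau : {finite_measure set BS -> \bar R}.
Local Open Scope ereal_scope.

Definition tstar (E : set BX) : \bar R := \int[tau]_q kappa q E.

Let tstar0 : tstar set0 = 0.
Proof.
by rewrite /tstar (eq_integral (cst 0)) ?integral0// => y _; rewrite measure0.
Qed.

Let tstar_ge0 U : 0 <= tstar U. Proof. exact: integral_ge0. Qed.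

Let tstar_sigma_additive : semi_sigma_additive tstar.
Proof.
move=> U mU tU mUU; rewrite [X in _ --> X](_ : _ =
  \int[tau]_y (\sum_(m <oo) kappa y (U m))); last first.
  apply: eq_integral => V _.
  by apply/esym/cvg_lim => //; exact/measure_semi_sigma_additive.
apply/cvg_closeP; split.
  by apply: is_cvg_nneseries => m _ _; exact: integral_ge0.
rewrite closeE// integral_nneseries// => m.
exact: measurable_kappa.
Qed.

HB.instance Definition _ := isMeasure.Build _ BX R
  tstar tstar0 tstar_ge0 tstar_sigma_additive.

Let tstar_fin : fin_num_fun tstar.
Proof.
move=> A mA; rewrite ge0_fin_numE ?tstar_ge0 //.
apply: (@le_lt_trans _ _ (\int[tau]_q (cst (n%:R%:E : \bar R)) q)).
  apply: ge0_le_integral => //.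
  - exact: measurable_kappa.
  - move=> q _; rewrite kappaE lee_fin ler_nat; exact: mult_le_n.
rewrite integral_cst //; rewrite ltey_eq; apply/orP; left; apply: fin_numM => //; exact: fin_num_measure.
Qed.

HB.instance Definition _ := Measure_isFinite.Build _ BX R tstar tstar_fin.

Definition tstarF : {finite_measure set BX -> \bar R} := tstar.

Let integral_tstar_indic E (mE : measurable E) :
  \int[tstarF]_z (\1_E z)%:E = \int[tau]_y (\int[kappa y]_z (\1_E z)%:E).
Proof.
rewrite integral_indic//= /tstar.
by apply: eq_integral => y _; rewrite integral_indic// setIT.
Qed.

Import HBNNSimple.

Let integral_tstar_nnsfun (f : {nnsfun BX >-> R}) :
  \int[tstarF]_z (f z)%:E = \int[tau]_y (\int[kappa y]_z (f z)%:E).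
Proof.
under [in LHS]eq_integral do rewrite fimfunE -fsumEFin//.
rewrite ge0_integral_fsum//; last 2 first.
  - by move=> r; exact/measurable_EFinP/measurableT_comp.
  - by move=> r z _; rewrite EFinM nnfun_muleindic_ge0.
under [in RHS]eq_integral.
  move=> y _.
  under eq_integral.
    by move=> z _; rewrite fimfunE -fsumEFin//; over.
  rewrite /= ge0_integral_fsum//; last 2 first.
    - by move=> r; exact/measurable_EFinP/measurableT_comp.
    - by move=> r z _; rewrite EFinM nnfun_muleindic_ge0.
  under eq_fsbigr.
    move=> r _.
    rewrite (integralZl_indic _ (fun r => f @^-1` [set r]))//; last first.
      by move=> r0; rewrite preimage_nnfun0.
    rewrite integral_indic// setIT.
    over.
  over.
rewrite /= ge0_integral_fsum//; last 2 first.
  - move=> r; apply: measurable_funeM.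
    exact: measurable_kappa.
  - move=> m y _.
    have := mulemu_ge0 (fun n => f @^-1` [set n]).
    by apply; exact: preimage_nnfun0.
apply: eq_fsbigr => r _.
rewrite (integralZl_indic _ (fun r => f @^-1` [set r]))//; last first.
  exact: preimage_nnfun0.
rewrite /= integral_tstar_indic//.
have [r0|r0] := leP 0%R r.
  rewrite ge0_integralZl//.
    by congr (_ * _); apply: eq_integral => y _; rewrite integral_indic// setIT.
  exact: measurable_kappa.
rewrite integral0_eq ?mule0.
  by rewrite integral0_eq// => y _; rewrite preimage_nnfun0// measure0 mule0.
by move=> y _; rewrite integral0_eq// => z _; rewrite preimage_nnfun0// indic0.
Qed.

Lemma integral_tstar f : (forall z, 0 <= f z) -> measurable_fun [set: BX] f ->
  \int[tstarF]_z f z = \int[tau]_y (\int[kappa y]_z f z).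
Proof.
move=> f0 mf.
pose f_ := nnsfun_approx measurableT mf.
transitivity (\int[tstarF]_z (lim ((f_ m z)%:E @[m --> \oo]))).
  by apply/eq_integral => z _; apply/esym/cvg_lim => //=; exact: cvg_nnsfun_approx.
rewrite monotone_convergence//; last 3 first.
  by move=> m; exact/measurable_EFinP.
  by move=> m z _; rewrite lee_fin.
  by move=> z _ a b ab; rewrite lee_fin; exact/lefP/nd_nnsfun_approx.
rewrite (_ : (fun _ => _) =
    (fun m => \int[tau]_y (\int[kappa y]_z (f_ m z)%:E)))//; last first.
  by apply/funext => m; rewrite integral_tstar_nnsfun.
transitivity (\int[tau]_y lim ((\int[kappa y]_z (f_ m z)%:E) @[m --> \oo])).
  rewrite -monotone_convergence//; last 3 first.
  - move=> m; apply: measurable_fun_integral_kernel => //.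
    + by move=> U mU; exact: measurable_kappa.
    + by move=> z; rewrite lee_fin.
    + exact/measurable_EFinP.
  - by move=> m y _; apply: integral_ge0 => // z _; rewrite lee_fin.
  - move=> y _ a b ab; apply: ge0_le_integral => //.
    + by move=> z _; rewrite lee_fin.
    + exact/measurable_EFinP.
    + exact/measurable_EFinP.
    + by move=> z _; rewrite lee_fin; exact/lefP/nd_nnsfun_approx.
apply: eq_integral => y _; rewrite -monotone_convergence//; last 3 first.
  - by move=> m; exact/measurable_EFinP.
  - by move=> m z _; rewrite lee_fin.
  - by move=> z _ a b ab; rewrite lee_fin; exact/lefP/nd_nnsfun_approx.
by apply: eq_integral => z _; apply/cvg_lim => //; exact: cvg_nnsfun_approx.
Qed.

End tstar.

Lemma integral_kappa (q : BS) (f : BX -> \bar R) :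
  (forall z, (0 <= f z)%E) -> measurable_fun [set: BX] f ->
  (\int[kappa q]_z f z = \sum_(x <- ent q) f x)%E.
Proof.
move=> f0 mf; rewrite /kappa ge0_integral_measure_sum //.
rewrite (big_nth (point : BX)) big_mkord; apply: eq_bigr => i _.
by rewrite integral_dirac // diracE in_setT mul1e.
Qed.

Definition sumf (g : X -> R) (q : S) : R := \sum_(x <- ent q) g x.

Lemma sumf_bound (g : X -> R) M : (forall x, `|g x| <= M) ->
  forall q, `|sumf g q| <= n%:R * M.
Proof.
move=> gM q; rewrite /sumf -(size_ent q); elim: (ent q) => [|x s IH] /=.
  by rewrite big_nil normr0 mul0r.
rewrite big_cons (le_trans (ler_normD _ _)) // -natr1 mulrDl mul1r addrC.
exact: lerD.
Qed.

Lemma sumf_kappa (g : X -> R) (g0 : forall x, 0 <= g x)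
  (mg : measurable_fun setT (g : BX -> R)) (q : BS) :
  (\int[kappa q]_x (g x)%:E = (sumf g q)%:E)%E.
Proof.
rewrite integral_kappa //; first by rewrite /sumf sumEFin.
  exact/measurable_EFinP.
Qed.

Lemma measurable_sumf (g : X -> R) (g0 : forall x, 0 <= g x)
  (mg : measurable_fun setT (g : BX -> R)) :
  measurable_fun setT (sumf g : BS -> R).
Proof.
apply/measurable_EFinP.
rewrite (_ : _ \o _ = fun q : BS => \int[kappa q]_x (g x)%:E)%E; last first.
  by apply/funext => q /=; rewrite sumf_kappa.
apply: measurable_fun_integral_kernel.
- by move=> U mU; exact: measurable_kappa.
- by move=> z; rewrite lee_fin.
- exact/measurable_EFinP.
Qed.

Lemma integrable_sumf (tau : {finite_measure set BS -> \bar R}) (g : X -> R) M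
  (g0 : forall x, 0 <= g x) (mg : measurable_fun setT (g : BX -> R))
  (gM : forall x, `|g x| <= M) :
  tau.-integrable setT (EFin \o sumf g).
Proof.
apply: (le_integrable measurableT _ _ (finite_measure_integrable_cst tau (n%:R * M) measurableT)).
  apply/measurable_EFinP; exact: measurable_sumf.
move=> q _ /=; rewrite lee_fin.
exact: le_trans (sumf_bound _ _ gM q) (ler_norm _).
Qed.

Lemma integral_tstar_fun (tau : {finite_measure set BS -> \bar R}) (g : X -> R) M :
  measurable_fun setT (g : BX -> R) -> (forall x, `|g x| <= M) ->
  (\int[tstarF tau]_x (g x)%:E = \int[tau]_q (sumf g q)%:E)%E.
Proof.
move=> mg gM.
have mgp : measurable_fun setT (g^\+ : BX -> R) by exact: measurable_funrpos.
have mgn : measurable_fun setT (g^\- : BX -> R) by exact: measurable_funrneg.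
have gpM x : `|g^\+ x| <= M.
  rewrite ger0_norm ?funrpos_ge0 // /funrpos ge_max (le_trans (ler_norm _) (gM x)) /=.
  exact: le_trans (normr_ge0 _) (gM x).
have gnM x : `|g^\- x| <= M.
  rewrite ger0_norm ?funrneg_ge0 // /funrneg ge_max (le_trans _ (gM x)) /=.
    exact: le_trans (normr_ge0 _) (gM x).
  by rewrite -normrN ler_norm.
rewrite integralE.
rewrite (_ : (fun x => (g x)%:E) = EFin \o g) // funerpos funerneg.
rewrite !integral_tstar //; do ?[by move=> z; rewrite /= lee_fin ?funrpos_ge0 ?funrneg_ge0 | exact/measurable_EFinP].
under eq_integral do rewrite /= sumf_kappa ?funrpos_ge0 //.
under [X in (_ - X)%E]eq_integral do rewrite /= sumf_kappa ?funrneg_ge0 //.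
rewrite -integralB_EFin //; last 2 first.
- exact: (integrable_sumf tau _ _ (@funrpos_ge0 _ _ g) mgp gpM).
- exact: (integrable_sumf tau _ _ (@funrneg_ge0 _ _ g) mgn gnM).
apply: eq_integral => q _; rewrite -EFinB /sumf -sumrB; congr (_%:E).
apply: eq_bigr => x _.
by have := congr1 (fun h => h x) (funrposBneg g).
Qed.

Lemma sumf_pi (g : X -> R) (v : 'rV[X]_n) :
  sumf g (\pi_S v) = \sum_(j < n) g (v ord0 j).
Proof.
rewrite /sumf (perm_big _ (ent_pi v)) /entries big_map.
by rewrite big_enum.
Qed.
End S.

Lemma cont_sum_seq (R : realType) (Z : topologicalType) (I : Type) (s : seq I)
  (h : I -> Z -> R) : (forall i, continuous (h i)) ->
  continuous (fun z => \sum_(i <- s) h i z).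
Proof.
move=> hc; elim: s => [|i s IH].
  by under eq_fun do rewrite big_nil; move=> z; exact: cvg_cst.
under eq_fun do rewrite big_cons.
move=> z; exact: (@continuousD _ _ _ (h i) (fun z => \sum_(j <- s) h j z) z (hc i z) (IH z)).
Qed.

Lemma cont_meas (R : realType) (T : ptopologicalType) (g : T -> R) :
  continuous g -> measurable_fun setT (g : borel T -> R).
Proof.
move=> cg; have hG : (measurable : set (set R)) = <<s (@RGenOpens.G R) >> by exact: RGenOpens.measurableE.
apply: (measurability (@RGenOpens.G R) hG).
move=> _ [B [x [y ->]] <-]; rewrite setTI; apply: borel_open.
by apply: (proj1 (continuousP g)) cg _ (itv_open x y).
Qed.

Lemma sumf_continuous (R : realType) (X : ptopologicalType) (n : nat) (g : X -> R) :
  continuous g -> continuous (sumf R X n g).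
Proof.
move=> cg; apply/quotient_continuous.
rewrite (_ : _ \o _ = fun v : 'rV[X]_n => \sum_(j < n) g (v ord0 j)); last first.
  by apply/funext => v /=; rewrite sumf_pi.
apply: cont_sum_seq => j v; apply: continuous_comp; last exact: cg.
exact: mx_coord_continuous.
Qed.


Lemma ptws_continuous (R : realType) (Z : topologicalType) (I : Type)
  (h : Z -> {ptws I -> R}) : (forall i, continuous (fun z => h z i)) -> continuous h.
Proof.
move=> hc z; apply/cvg_sup => i.
have := @continuous_comp_initial _ _ _ (fun f : I -> R => f i) h (hc i).
exact.
Qed.

HB.instance Definition _ (R : realType) (T : ptopologicalType) :=
  gen_eqMixin (bcfun R T).

Local Close Scope quotient_scope.

Theorem lemma6 (R : realType) (X : ptopologicalType) (n : nat) :
  polish R X ->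
  exists star : Meas R (sympow X n) -> Meas R X,
    (forall (tau : Meas R (sympow X n)) (E : set (borel X)),
        measurable E ->
        (star tau : fmeasure R X) E =
          (\int[tau : fmeasure R (sympow X n)]_q ((mult_in E q)%:R)%:E)%E) /\
    continuous star.
Proof.
move=> _.
exists (fun tau : Meas R (sympow X n) => (tstarF R X n (tau : fmeasure R (sympow X n)) : fmeasure R X) : Meas R X).
split.
  move=> tau E mE /=; rewrite /tstar; apply: eq_integral => q _.
  by rewrite kappaE.
apply: continuous_comp_initial; apply: ptws_continuous => f.
case: f => g [cg [M gM]].
have Fc : continuous (sumf R X n g) /\ exists M : R, forall q, `|sumf R X n g q| <= M.
  split; first exact: sumf_continuous.
  by exists (n%:R * M); exact: sumf_bound.
pose Fb : bcfun R (sympow X n) := exist _ (sumf R X n g) Fc.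
rewrite (_ : (fun z => _) = (fun tau : Meas R (sympow X n) => meas_eval tau Fb)); last first.
  apply/funext => tau /=; rewrite /meas_eval /=; congr fine.
  exact: (integral_tstar_fun _ _ _ _ _ _ (cont_meas _ _ _ cg) gM).
move=> tau.
have h1 := @initial_continuous _ _ (@meas_eval R (sympow X n)) tau.
have h2 := @proj_continuous (bcfun R (sympow X n)) (fun _ => R) Fb (meas_eval tau).
exact: (continuous_comp h1 h2).
Qed.
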